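(* Let $S$ be a semigroup and let $a,b\in S$ satisfy $a=aba$ and $b=bab$. Then \[(aSa,\cdot)\cong(aSb,\star_{aab})\cong(bSa,\star_{baa}).\]
   Context: For $u,v$ in a semigroup $S$, $uSv=\{uxv: x\in S\}$. For $c\in S$, $\star_c$ denotes the sandwich operation $x\star_c y=xcy$. $(T,\star_c)$ denotes the subset $T\subseteq S$ with the operation $\star_c$ (under which it is closed), and $(T,\cdot)$ denotes $T$ with the original operation of $S$. *)

(* Defs.v *)
Definition associative_op {T : Type} (mul : T -> T -> T) : Prop :=
  forall x y z, mul x (mul y z) = mul (mul x y) z.

Definition sandwich_set {T : Type} (mul : T -> T -> T) (u v : T) : T -> Prop :=
  fun y => exists x, y = mul (mul u x) v.

Definition star {T : Type} (mul : T -> T -> T) (c : T) : T -> T -> T :=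
  fun x y => mul (mul x c) y.

Definition subsemigroup_iso {T : Type} (A : T -> Prop) (op1 : T -> T -> T)
    (B : T -> Prop) (op2 : T -> T -> T) : Prop :=
  exists f : T -> T,
    (forall x, A x -> B (f x)) /\
    (forall x y, A x -> A y -> f x = f y -> x = y) /\
    (forall z, B z -> exists x, A x /\ f x = z) /\
    (forall x y, A x -> A y -> f (op1 x y) = op2 (f x) (f y)).

(* Main.v *)
Require Import Defs.

Theorem lemma2p5 (T : Type) (mul : T -> T -> T) (mulA : associative_op mul)
  (a b : T) (haba : a = mul (mul a b) a) (hbab : b = mul (mul b a) b) :
  subsemigroup_iso (sandwich_set mul a a) mul
                   (sandwich_set mul a b) (star mul (mul (mul a a) b)) /\
  subsemigroup_iso (sandwich_set mul a b) (star mul (mul (mul a a) b))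
                   (sandwich_set mul b a) (star mul (mul (mul b a) a)).
Proof.
  unfold associative_op in mulA.
  assert (A0 : mul a (mul b a) = a) by (rewrite mulA; auto).
  assert (B0 : mul b (mul a b) = b) by (rewrite mulA; auto).
  assert (A1 : forall s, mul a (mul b (mul a s)) = mul a s)
    by (intro s; rewrite (mulA b), mulA, A0; reflexivity).
  assert (B1 : forall s, mul b (mul a (mul b s)) = mul b s)
    by (intro s; rewrite (mulA a), mulA, B0; reflexivity).
  unfold subsemigroup_iso, sandwich_set, star.
  Ltac nf mulA A0 B0 A1 B1 := repeat rewrite <- mulA; repeat (rewrite ?A0, ?B0, ?A1, ?B1).
  split.
  - exists (fun x => mul x b). repeat split.
    + intros x [s ->]. exists (mul s a). nf mulA A0 B0 A1 B1. reflexivity.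
    + intros x y [s ->] [t ->] H.
      assert (H' : mul (mul (mul (mul a s) a) b) a = mul (mul (mul (mul a t) a) b) a) by (rewrite H; reflexivity).
      nf mulA A0 B0 A1 B1. revert H'. nf mulA A0 B0 A1 B1. auto.
    + intros z [s ->]. exists (mul (mul a s) (mul b a)). split.
      * exists (mul s b). nf mulA A0 B0 A1 B1. reflexivity.
      * nf mulA A0 B0 A1 B1. reflexivity.
    + intros x y [s ->] [t ->]. nf mulA A0 B0 A1 B1. reflexivity.
  - exists (fun x => mul (mul b x) a). repeat split.
    + intros x [s ->]. exists (mul (mul a s) b). nf mulA A0 B0 A1 B1. reflexivity.
    + intros x y [s ->] [t ->] H.
      assert (H' : mul (mul a (mul (mul b (mul (mul a s) b)) a)) b = mul (mul a (mul (mul b (mul (mul a t) b)) a)) b) by (rewrite H; reflexivity).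
      revert H'. nf mulA A0 B0 A1 B1. auto.
    + intros z [s ->]. exists (mul (mul a (mul (mul b s) a)) b). split.
      * exists (mul (mul b s) a). nf mulA A0 B0 A1 B1. reflexivity.
      * nf mulA A0 B0 A1 B1. reflexivity.
    + intros x y [s ->] [t ->]. nf mulA A0 B0 A1 B1. reflexivity.
Qed.
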